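(* Suppose $D=dH-\sum_im_iE_i$ is an effective divisor class on $X$ with $\chi(D)\ge1$, and $A_t$ is an ample divisor with $2A_t\cdot D\le A_t\cdot K$. Let $\chi_{\max}$ be the maximal value of $\chi(D')$ among effective divisor classes $D'$ satisfying $2A_t\cdot D'\le A_t\cdot K$, and put $\ell=\chi_{\max}-\chi(D)$. Then $D$ is at most $\ell$ steps away from having balanced multiplicities. In particular, if additionally $10\le n\le 17$, then $\chi(D)=\chi_{\max}=1$ and $D$ is balanced.
   Context: Let $X$ be the blowup of $\mathbb{P}^2_{\mathbb{C}}$ at $n$ very general points, with $H$ the pullback of a line class, $E_i$ the exceptional divisors, $E=\sum_iE_i$, and $K=K_X=-3H+E$. For real $t$, $A_t=tH-E$. Write $\chi(D)=\chi(\mathcal{O}_X(D))$; effective means the class of an effective divisor (zero allowed). A divisor $D=dH-\sum_im_iE_i$ has balanced multiplicities (is balanced) if $|m_i-m_j|\le1$ for all $i,j$. If $D$ is not balanced, form a sequence $D=D_0,D_1,\dots,D_k$ by repeatedly increasing one of the smallest multiplicities by $1$ and decreasing one of the largest multiplicities by $1$, stopping at the first balanced divisor $D_k$; then $D$ is said to be $k$ steps away from having balanced multiplicities ($k$ is independent of choices; a balanced $D$ is $0$ steps away). *)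

(* Defs.v *)
From HB Require Import structures.
From mathcomp Require Import all_boot all_order all_algebra.
From mathcomp Require Import complex.
From mathcomp Require Import Rstruct.
Set Implicit Arguments. Unset Strict Implicit. Unset Printing Implicit Defensive.
Import Order.TTheory GRing.Theory Num.Theory.
Local Open Scope ring_scope.

Notation RR := Rdefinitions.R.
Definition C : numClosedFieldType := complex RR.

(* A configuration of n points in the affine chart C^2 of P^2. *)
Definition config (n : nat) := 'I_n -> C * C.

Definition polyfun (n : nat) (g : config n -> C) : Prop :=
  exists s : seq (C * ('I_n -> nat * nat)),
    forall p : config n,
      g p = \sum_(ce <- s) ce.1 * \prod_(i < n) (((p i).1 ^+ (ce.2 i).1) * ((p i).2 ^+ (ce.2 i).2)).

(* P holds for very general configurations: outside a countable union of
   proper Zariski-closed subsets (zero sets of non-identically-zero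
   polynomial functions). *)
Definition very_general (n : nat) (P : config n -> Prop) : Prop :=
  exists G : nat -> config n -> C,
    (forall k, polyfun (G k) /\ exists p, G k p != 0) /\
    (forall p : config n, (forall k, G k p != 0) -> P p).

(* Bivariate polynomials f(x,y) as {poly {poly C}}: outer variable y,
   inner variable x; f`_i`_j is the coefficient of y^i x^j. *)
(* f has multiplicity >= m at the point (a,b): all partial derivatives of
   order < m vanish at (a,b) (characteristic 0). *)
Definition mult_ge (f : {poly {poly C}}) (ab : C * C) (m : int) : Prop :=
  forall i j : nat, ((i + j)%:Z < m)%R ->
    ((map_poly (fun q : {poly C} => q^`(j)) (f^`(i))).[ab.2%:P]).[ab.1] = 0.

(* The class dH - sum_i m_i E_i on the blowup X_p of P^2 at p is effective:
   there is a nonzero plane curve of degree d (dehomogenised: total degree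
   <= d) with multiplicity >= m_i at p_i for every i. *)
Definition effective (n : nat) (p : config n) (d : int) (m : 'I_n -> int) : Prop :=
  exists f : {poly {poly C}}, f != 0 /\
    (forall i j : nat, (d < (i + j)%:Z)%R -> f`_i`_j = 0) /\
    (forall k, mult_ge f (p k) (m k)).

(* Intersection numbers with A_t = tH - E and K = -3H + E. *)
Definition AdotD (n : nat) (t : RR) (d : int) (m : 'I_n -> int) : RR :=
  t * d%:~R - (\sum_(k < n) m k)%:~R.
Definition AdotK (n : nat) (t : RR) : RR := - 3 * t + n%:R.

(* chi(O_X(D)) by Riemann-Roch: 1 + (D^2 - D.K)/2
   = 1 + (d^2 + 3d - sum_i (m_i^2 + m_i))/2 (the numerator is even). *)
Definition chi (n : nat) (d : int) (m : 'I_n -> int) : int :=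
  1 + ((d * d + 3 * d - \sum_(k < n) (m k * m k + m k)) %/ 2)%Z.

Definition nonzero_class (n : nat) (d : int) (m : 'I_n -> int) : Prop :=
  d != 0 \/ exists k, m k != 0.

(* A_t ample on X_p (Nakai-Moishezon criterion for R-divisors):
   A_t^2 > 0 and A_t . D > 0 for every nonzero effective class D. *)
Definition ample (n : nat) (p : config n) (t : RR) : Prop :=
  0 < t * t - n%:R /\
  forall d m, effective p d m -> nonzero_class d m -> 0 < AdotD t d m.

Definition balanced (n : nat) (m : 'I_n -> int) : Prop :=
  forall i j, `|m i - m j| <= 1.

Definition balance_step (n : nat) (m m' : 'I_n -> int) : Prop :=
  ~ balanced m /\
  exists i j : 'I_n, (forall k, m i <= m k) /\ (forall k, m k <= m j) /\
    m' = (fun k => m k + (k == i)%:Z - (k == j)%:Z).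

Definition steps_away (n : nat) (m : 'I_n -> int) (k : nat) : Prop :=
  exists s : nat -> ('I_n -> int),
    s 0%N = m /\ (forall r, (r < k)%N -> balance_step (s r) (s r.+1)) /\
    balanced (s k).

Definition is_chi_max (n : nat) (p : config n) (t : RR) (chimax : int) : Prop :=
  (exists d m, effective p d m /\ 2 * AdotD t d m <= AdotK n t /\ chi d m = chimax) /\
  (forall d m, effective p d m -> 2 * AdotD t d m <= AdotK n t -> chi d m <= chimax).

(* Main.v *)
Require Import Defs.
From HB Require Import structures.
From mathcomp Require Import all_boot all_order all_algebra.
From mathcomp Require Import complex.
From mathcomp Require Import Rstruct.
From mathcomp Require Import zify ring lra.
Import Order.TTheory GRing.Theory Num.Theory.
Local Open Scope ring_scope.


Fixpoint tri (M : nat) : seq (nat * nat) :=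
  match M with
  | 0%N => [::]
  | M'.+1 => tri M' ++ [seq (i, M' - i)%N | i <- iota 0 M'.+1]
  end.

Lemma triS M : tri M.+1 = tri M ++ [seq (i, M - i)%N | i <- iota 0 M.+1].
Proof. by []. Qed.

Lemma size_tri M : (2 * size (tri M) = M * M.+1)%N.
Proof. elim: M => [//|M IH]; rewrite triS size_cat size_map size_iota; move: IH; lia. Qed.

Lemma mem_tri M x : (x \in tri M) = (x.1 + x.2 < M)%N.
Proof.
elim: M => [//|M IH]; rewrite triS mem_cat IH.
apply/idP/idP.
- case/orP => [H|]; first lia.
  case/mapP => i; rewrite mem_iota => Hi ->/=; lia.
- move=> H; case: (ltnP (x.1 + x.2) M) => H2; first by apply/orP; left.
  apply/orP; right; apply/mapP; exists x.1; first by rewrite mem_iota; lia.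
  clear IH; case: x H H2 => a b /= H H2; congr pair; lia.
Qed.

Lemma uniq_tri M : uniq (tri M).
Proof.
elim: M => [//|M IH]; rewrite triS cat_uniq IH andTb; apply/andP; split.
- apply/hasPn => x /mapP [i _ ->]; rewrite mem_tri /=. lia.
- rewrite map_inj_in_uniq ?iota_uniq // => a b; rewrite !mem_iota => Ha Hb [] //.
Qed.

Lemma kernel_lemma (N : nat) (s : seq ('I_N -> C)) : (size s < N)%N ->
  exists v : 'I_N -> C, (exists a, v a != 0) /\
    forall k, (k < size s)%N -> \sum_a v a * (nth (fun _ => 0) s k) a = 0.
Proof.
move=> Hs.
pose A : 'M[C]_(N, size s) := \matrix_(a, k) (nth (fun _ => 0) s k) a.
have HK : kermx A != 0.
  apply/eqP => H0; have := mxrank_ker A; rewrite H0 mxrank0.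
  have := rank_leq_col A; lia.
have [i Hi] : exists i, row i (kermx A) != 0.
  apply/existsP; apply: contraNT HK; rewrite negb_exists => /forallP H.
  apply/eqP/row_matrixP => i; rewrite row0; exact/eqP/negPn.
have /existsP [a0 Ha0] : [exists a, row i (kermx A) 0 a != 0].
  apply: contraNT Hi; rewrite negb_exists => /forallP H.
  apply/eqP/rowP => a; move: (H a); rewrite negbK => /eqP ->; by rewrite mxE.
exists (fun a => row i (kermx A) 0 a); split; first by exists a0.
move=> k Hk.
have : (row i (kermx A) *m A) 0 (Ordinal Hk) = 0.
  by rewrite -row_mul mulmx_ker row0 mxE.
rewrite mxE => H0; rewrite -[X in _ = X]H0; apply: eq_bigr => a _; idtac.
by congr (_ * _); rewrite /A mxE.
Qed.


Lemma kernel_lemma2 (N : nat) (X : eqType) (s : seq X) (r : X -> 'I_N -> C) :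
  (size s < N)%N ->
  exists v : 'I_N -> C, (exists a, v a != 0) /\
    forall x, x \in s -> \sum_a v a * r x a = 0.
Proof.
move=> Hs; have [|v [Hv0 Hv]] := @kernel_lemma N (map r s); first by rewrite size_map.
exists v; split => // x Hx.
have := Hv (index x s); rewrite size_map index_mem => /(_ Hx).
by rewrite (nth_map x) ?index_mem // nth_index.
Qed.

Definition dval (i j : nat) (ab : C * C) (f : {poly {poly C}}) : C :=
  ((map_poly (fun q : {poly C} => q^`(j)) (f^`(i))).[ab.2%:P]).[ab.1].

Lemma derivn_0 j : (0 : {poly C})^`(j) = 0.
Proof. by apply: derivn_poly0; rewrite size_poly0. Qed.

Lemma map_derivD j (f g : {poly {poly C}}) :
  map_poly (fun q : {poly C} => q^`(j)) (f + g) =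
  map_poly (fun q : {poly C} => q^`(j)) f + map_poly (fun q : {poly C} => q^`(j)) g.
Proof.
apply/polyP => l; rewrite coefD !coef_map_id0 ?derivn_0 // coefD derivnD //.
Qed.

Lemma map_derivC j (c : C) (g : {poly {poly C}}) :
  map_poly (fun q : {poly C} => q^`(j)) ((c%:P)%:P * g) =
  (c%:P)%:P * map_poly (fun q : {poly C} => q^`(j)) g.
Proof.
apply/polyP => l; rewrite coefCM !coef_map_id0 ?derivn_0 // coefCM.
by rewrite !mul_polyC derivnZ.
Qed.

Lemma dvalD i j ab f g : dval i j ab (f + g) = dval i j ab f + dval i j ab g.
Proof. by rewrite /dval derivnD map_derivD !hornerD. Qed.

Lemma dval0 i j ab : dval i j ab 0 = 0.
Proof.
have := dvalD i j ab 0 0; rewrite addr0 => /eqP.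
by rewrite -subr_eq subrr eq_sym => /eqP.
Qed.

Lemma dvalC i j ab c f : dval i j ab ((c%:P)%:P * f) = c * dval i j ab f.
Proof.
rewrite /dval !mul_polyC derivnZ -!mul_polyC map_derivC hornerCM.
by rewrite hornerCM.
Qed.

Lemma dval_sum i j ab N (F : 'I_N -> {poly {poly C}}) :
  dval i j ab (\sum_(a < N) F a) = \sum_(a < N) dval i j ab (F a).
Proof. exact: (big_morph _ (dvalD i j ab) (dval0 i j ab)). Qed.

Definition mono (ij : nat * nat) : {poly {poly C}} := ('X^(ij.2))%:P * 'X^(ij.1).

Lemma coef_mono c ij i j :
  (((c%:P)%:P * mono ij)`_i)`_j = c * ((ij == (i, j)))%:R.
Proof.
case: ij => a b; rewrite /mono /= coefCM coefCM coefXn coefCM.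
rewrite xpair_eqE.
have [Hai|Hai] := eqVneq a i; first subst a.
  by rewrite /= mulr1 coefXn eq_sym.
by rewrite /= mulr0 coef0 mulr0.
Qed.


Lemma eff_d_ge0 n p d (m : 'I_n -> int) : effective p d m -> 0 <= d.
Proof.
case=> f [f0 [Hdeg _]]; rewrite leNgt; apply/negP => Hd.
move/negP: f0; apply; apply/eqP/polyP => i; apply/polyP => j.
rewrite !coef0; apply: Hdeg; lia.
Qed.

Lemma Posz_sum (I : finType) (F : I -> nat) :
  ((\sum_i F i)%N : int) = \sum_i (F i : int).
Proof. exact: (big_morph Posz PoszD (erefl _)). Qed.

Lemma count_eff n p d (m : 'I_n -> int) : 0 <= d -> 1 <= chi d m -> effective p d m.
Proof.
move=> Hd Hchi.
set D := `|d|%N. have Hd' : d = D%:Z by rewrite /D; lia.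
pose T := tri D.+1. pose N := size T.
pose mk := fun k : 'I_n => if 0 <= m k then `|m k|%N else 0%N.
pose s := [seq (k, ij) | k <- enum 'I_n, ij <- tri (mk k)].
pose r := fun (x : 'I_n * (nat * nat)) (a : 'I_N) =>
  dval x.2.1 x.2.2 (p x.1) (mono (nth (0%N, 0%N) T a)).
have Hs : (size s < N)%N.
  rewrite size_allpairs_dep sumnE big_map big_enum /=.
  have H1 : (2 * \sum_(k < n) size (tri (mk k)))%N = (\sum_(k < n) mk k * (mk k).+1)%N.
    by rewrite big_distrr /=; apply: eq_bigr => k _; rewrite size_tri.
  have H2 : \sum_(k < n) ((mk k * (mk k).+1)%N : int) <= \sum_(k < n) (m k * m k + m k).
    apply: ler_sum => k _; rewrite /mk; case: ifP => Hk; move: Hk; case: (m k) => x Hx; rewrite ?mul0n; nia.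
  have H3 : 0 <= d * d + 3 * d - \sum_(k < n) (m k * m k + m k).
    move: Hchi; rewrite /chi -[X in X <= _]addr0 lerD2l divz_ge0 //.
  have H4 : (2 * N = D.+1 * D.+2)%N by rewrite /N /T size_tri.
  have H5 := @Posz_sum _ (fun k : 'I_n => (mk k * (mk k).+1)%N).
  rewrite -/(\sum_(k < n) size (tri (mk k))).
  move: H1 H2 H3 H4 H5; rewrite Hd'.
  set S1 := \sum_(k < n) size (tri (mk k)).
  set S2 := \sum_(k < n) (mk k * (mk k).+1)%N.
  set S3 := \sum_(k < n) ((mk k * (mk k).+1)%N : int).
  set S4 := \sum_(k < n) (m k * m k + m k).
  move=> H1 H2 H3 H4 H5; nia.
have [v [[a0 Ha0] Hv]] := @kernel_lemma2 _ _ _ r Hs.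
pose f := \sum_(a < N) ((v a)%:P)%:P * mono (nth (0%N, 0%N) T a).
have Hcoef : forall i j, f`_i`_j = \sum_(a < N) v a * ((nth (0%N, 0%N) T a == (i, j)))%:R.
  move=> i j; rewrite coef_sum coef_sum; apply: eq_bigr => a _; exact: coef_mono.
have HT : forall a : 'I_N, nth (0%N, 0%N) T a \in T by move=> a; apply: mem_nth.
exists f; split; [|split].
- apply/negP => /eqP f0.
  have := Hcoef (nth (0%N, 0%N) T a0).1 (nth (0%N, 0%N) T a0).2.
  rewrite f0 !coef0 -surjective_pairing (bigD1 a0) //= eqxx mulr1 big1 ?addr0.
    by move=> H; move: Ha0; rewrite -H eqxx.
  move=> a Ha; rewrite nth_uniq ?uniq_tri // ?mulr0 //.
  by rewrite val_eqE (negbTE Ha) mulr0.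
- move=> i j Hij; rewrite Hcoef big1 // => a _.
  case: eqP => [Heq|]; last by rewrite mulr0.
  have := HT a; rewrite Heq mem_tri /=. lia.
- move=> k i j Hij.
  have Hx : (k, (i, j)) \in s.
    apply/allpairsPdep; exists k, (i, j); split => //; first by rewrite mem_enum.
    rewrite mem_tri /= /mk; case: ifP; lia.
  have := Hv _ Hx; rewrite /r /= => <-.
  rewrite -[LHS]/(dval i j (p k) f) dval_sum; apply: eq_bigr => a _.
  by rewrite dvalC.
Qed.


Lemma sum_delta n (i : 'I_n) (F : 'I_n -> int) : \sum_k (k == i)%:Z * F k = F i.
Proof.
rewrite (bigD1 i) //= eqxx mul1r big1 ?addr0 // => k /negbTE ->; by rewrite mul0r.
Qed.

Arguments sum_delta {n}.

Definition stepm n (m : 'I_n -> int) (i j : 'I_n) : 'I_n -> int :=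
  fun k => m k + (k == i)%:Z - (k == j)%:Z.
Arguments stepm {n}.

Lemma step_sum n (m : 'I_n -> int) i j : \sum_k stepm m i j k = \sum_k m k.
Proof.
rewrite /stepm sumrB big_split /=.
have := sum_delta i (fun _ => 1); have := sum_delta j (fun _ => 1).
rewrite /=.
under eq_bigr do rewrite mulr1.
move=> ->.
under eq_bigr do rewrite mulr1.
move=> ->.
by rewrite addrK.
Qed.

Lemma chi_eq d n (m : 'I_n -> int) :
  chi d m = 1 + ((d * d + 3 * d - \sum_k (m k * m k + m k)) %/ 2)%Z.
Proof. by []. Qed.

Lemma step_chi n d (m : 'I_n -> int) i j :
  ~ balanced m -> (forall k, m i <= m k) -> (forall k, m k <= m j) ->
  chi d m + 1 <= chi d (stepm m i j).
Proof.
move=> Hnb Hi Hj.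
have [a [b Hab]] : exists a b, 1 < `|m a - m b|.
  apply: Classical_Prop.NNPP => H; apply: Hnb => a b; rewrite leNgt; apply/negP => Hab.
  by apply: H; exists a, b.
have Hgap : 2 <= m j - m i.
  have := Hi a; have := Hi b; have := Hj a; have := Hj b; move: Hab. lia.
have Hij : i != j by apply/eqP => E; move: Hgap; rewrite E subrr.
have Hpt : forall k, stepm m i j k * stepm m i j k + stepm m i j k =
   (m k * m k + m k) + (k == i)%:Z * (2 * m k + 2) - (k == j)%:Z * (2 * m k).
  move=> k; rewrite /stepm.
  case: (eqVneq k i) => [->|Hki]; first by rewrite (negbTE Hij) /=; ring.
  by case: (eqVneq k j) => [->|Hkj] /=; ring.
have Hs : \sum_k (stepm m i j k * stepm m i j k + stepm m i j k) =
    \sum_k (m k * m k + m k) + (2 * m i + 2) - 2 * m j.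
  rewrite (eq_bigr _ (fun k _ => Hpt k)) sumrB big_split /=.
  by rewrite (sum_delta i (fun k => 2 * m k + 2)) (sum_delta j (fun k => 2 * m k)).
rewrite !chi_eq Hs.
set X := d * d + 3 * d - _.
have -> : d * d + 3 * d -
   (\sum_k (m k * m k + m k) + (2 * m i + 2) - 2 * m j) =
   (m j - m i - 1) * 2 + X by rewrite /X; ring.
rewrite divzMDl //; lia.
Qed.


Lemma cauchy {n} (m : 'I_n -> int) :
  (\sum_k m k) * (\sum_k m k) <= n%:Z * \sum_k m k * m k.
Proof.
case: n m => [|n'] m; first by rewrite !big_ord0 mulr0.
set n := n'.+1.
set S := \sum_k m k; set Q := \sum_k m k * m k.
have H : 0 <= \sum_k (n%:Z * m k - S) ^+ 2 by apply: sumr_ge0 => k _; exact: sqr_ge0.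
have E : \sum_k (n%:Z * m k - S) ^+ 2 = n%:Z * (n%:Z * Q - S * S).
  have -> : \sum_k (n%:Z * m k - S) ^+ 2 =
     \sum_k ((n%:Z * n%:Z) * (m k * m k) + (S * S - (2 * n%:Z * S) * m k)).
    by apply: eq_bigr => k _; ring.
  rewrite big_split /= sumrB -!mulr_sumr sumr_const card_ord -/S -/Q.
  rewrite -mulr_natr natz /n. ring.
by move: H; rewrite E pmulr_rge0 // subr_ge0.
Qed.

Lemma divz2_le0 (x : int) : x <= 1 -> (x %/ 2)%Z <= 0.
Proof.
move=> Hx; have E := divz_eq x 2; have H0 : 0 <= (x %% 2)%Z by apply: modz_ge0.
move: E H0; set q := (x %/ 2)%Z; set r := (x %% 2)%Z; lia.
Qed.

Lemma arith n d (m : 'I_n -> int) (t : RR) : 0 <= d -> 0 < t -> n%:R < t * t ->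
  (0 < n)%N -> (n <= 17)%N -> 2 * AdotD t d m <= AdotK n t -> chi d m <= 1.
Proof.
move=> Hd Ht Htt Hn Hn17 Hc.
have HCS := cauchy m.
move: Hc; rewrite /AdotD /AdotK.
set S := \sum_k m k. set Q := \sum_k m k * m k.
move: HCS; rewrite -/S -/Q => HCS Hc.
have HCSr : (S%:~R : RR) * S%:~R <= n%:R * Q%:~R.
  by rewrite -intrM -[n%:R]/((n%:Z)%:~R) -intrM ler_int.
have Hdr : 0 <= (d%:~R : RR) by rewrite ler0z.
have Hnr : 0 < (n%:R : RR) by rewrite ltr0n.
have Hreal : ((2 * d + 3) ^+ 2 - n%:Z)%:~R < (4 * (Q + S))%:~R :> RR.
  rewrite intrB !intrM intrD !intrM -[(n%:Z)%:~R]/(n%:R) -[(Posz 2)%:~R]/(2%:R).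
  rewrite -[(Posz 3)%:~R]/(3%:R) -[(Posz 4)%:~R]/(4%:R) /=.
  set dr := (d%:~R : RR) in Hc Hdr *; set Sr := (S%:~R : RR) in Hc HCSr *.
  set Qr := (Q%:~R : RR) in HCSr *; set nr := (n%:R : RR) in Hc Htt Hnr HCSr *.
  set u := t * (2 * dr + 3).
  have Hu : 0 <= u by rewrite /u; apply: mulr_ge0; lra.
  have Hu2 : u <= nr + 2 * Sr by rewrite /u; lra.
  have h1 : 0 <= (2 * Sr - u + nr) * (2 * Sr + u + nr) by apply: mulr_ge0; lra.
  have h2 : 0 < (t * t - nr) * ((2 * dr + 3) ^+ 2).
    apply: mulr_gt0; first lra.
    by rewrite exprn_gt0 //; lra.
  have key : 0 < nr * (4 * (Qr + Sr) - ((2 * dr + 3) ^+ 2 - nr)).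
    move: h1 h2; rewrite /u; nra.
  move: key; rewrite pmulr_rgt0 //; lra.
move: Hreal; rewrite ltr_int => Hint.
rewrite /chi.
have -> : \sum_k (m k * m k + m k) = Q + S by rewrite big_split.
suff : d * d + 3 * d - (Q + S) <= 1 by move/divz2_le0; lia.
move: Hint Hn17; lia.
Qed.


Arguments eff_d_ge0 {n p d m}.
Arguments count_eff {n} p {d m}.
Arguments step_chi {n} d {m i j}.
Arguments arith {n d m t}.
Arguments step_sum {n}.

Lemma AdotD_step n t d (m : 'I_n -> int) i j : AdotD t d (stepm m i j) = AdotD t d m.
Proof. by rewrite /AdotD step_sum. Qed.

Lemma minmax_ex n (m : 'I_n -> int) (a : 'I_n) :
  exists i j, (forall k, m i <= m k) /\ (forall k, m k <= m j).
Proof.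
case: (arg_minP m (P := xpredT) (i0 := a) isT) => i _ Hi.
case: (arg_maxP m (P := xpredT) (i0 := a) isT) => j _ Hj.
by exists i, j; split => k; [exact: Hi | exact: Hj].
Qed.

Theorem proposition4p4 (n : nat) :
  very_general (fun p : config n =>
    forall (d : int) (m : 'I_n -> int) (t : RR) (chimax : int),
      effective p d m -> 1 <= chi d m ->
      ample p t -> 2 * AdotD t d m <= AdotK n t ->
      is_chi_max p t chimax ->
      (forall k : nat, steps_away m k -> k%:Z <= chimax - chi d m) /\
      ((10 <= n <= 17)%N -> chi d m = 1 /\ chimax = 1 /\ balanced m)).
Proof.
exists (fun _ _ => 1); split.
  move=> k; split.
  - exists [:: (1, fun _ => (0%N, 0%N))] => q.
    rewrite big_cons big_nil addr0 mul1r big1 // => i _.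
    by rewrite !expr0 mulr1.
  - by exists (fun _ => (0, 0)); exact: oner_neq0.
move=> p _ d m t chimax Heff Hchi Hamp Hc [[d' [m' [Heff' [Hc' Hchi']]]] Hmax].
have Hd := eff_d_ge0 Heff.
have Ht : 0 < t.
  have E1 : effective p 1 (fun _ : 'I_n => 0).
    apply: count_eff => //.
    by rewrite /chi big1 // => k _; rewrite mulr0 addr0.
  have := Hamp.2 1 (fun _ => 0) E1 (or_introl (oner_neq0 _)).
  by rewrite /AdotD big1 // mulr1 subr0.
split.
- move=> k [s [Hs0 [Hstep Hbal]]].
  have Hind : forall r, (r <= k)%N ->
      \sum_i s r i = \sum_i m i /\ chi d m + r%:Z <= chi d (s r).
    elim=> [|r IH] Hr; first by rewrite Hs0 addr0.
    have [IH1 IH2] := IH (ltnW Hr).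
    have [Hnb [i [j [Hi [Hj Heq]]]]] := Hstep r Hr.
    have -> : s r.+1 = stepm (s r) i j by rewrite Heq.
    rewrite step_sum IH1; split => //.
    have := step_chi d Hnb Hi Hj; move: IH2; lia.
  have [H1 H2] := Hind k (leqnn k).
  have Heffk : effective p d (s k) by apply: count_eff => //; lia.
  have Hck : 2 * AdotD t d (s k) <= AdotK n t by rewrite /AdotD H1.
  have := Hmax d (s k) Heffk Hck; lia.
- move=> /andP [Hn10 Hn17].
  have Hn0 : (0 < n)%N by lia.
  have Htt : n%:R < t * t by have := Hamp.1; lra.
  have H1 : chimax <= 1.
    by rewrite -Hchi'; apply: (arith (eff_d_ge0 Heff') Ht Htt Hn0 Hn17 Hc').
  have H2 := Hmax d m Heff Hc.
  have Hc1 : chi d m = 1 by lia.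
  split => //; split; first lia.
  apply: Classical_Prop.NNPP => Hnb.
  have [a _] : exists a b, 1 < `|m a - m b|.
    apply: Classical_Prop.NNPP => H; apply: Hnb => a b; rewrite leNgt; apply/negP => Hab.
    by apply: H; exists a, b.
  have [i [j [Hi Hj]]] := @minmax_ex _ m a.
  have := step_chi d Hnb Hi Hj.
  have : chi d (stepm m i j) <= 1.
    apply: (arith Hd Ht Htt Hn0 Hn17); by rewrite AdotD_step.
  lia.
Qed.
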